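(* Let $\alpha\in(0,1)$, $a_1,a_2\in\mathbb{R}$, and let $A$ be the $N\times N$ matrix defined below with $a_0=a_2$ (symmetric case). Let $R_N$ denote the set of points $(a_2,a_1)\in\mathbb{R}^2$ for which every eigenvalue $\lambda$ of $A$ (all of which are real) satisfies $1-2^{\alpha}<\lambda<1$. Then: (i) if $N\ge 2$ is even, $R_N$ is the open interior of the quadrilateral with vertices $Q_1=(0,1)$, $Q_2=\left(-2^{\alpha-2},\,2^{\alpha-1}+1-2^{\alpha}\right)$, $Q_3=(0,1-2^{\alpha})$, $Q_4=\left(2^{\alpha-2},\,1-2^{\alpha-1}\right)$; (ii) if $N\ge 3$ is odd, $R_N$ is the open interior of the quadrilateral with vertices $Q_1=(0,1)$, $Q_2'=\left(-\frac{2^{\alpha-1}}{1+\cos(\pi/N)},\,\frac{2^{\alpha}}{1+\cos(\pi/N)}+1-2^{\alpha}\right)$, $Q_3=(0,1-2^{\alpha})$, $Q_4'=\left(\frac{2^{\alpha-1}}{1+\cos(\pi/N)},\,1-\frac{2^{\alpha}}{1+\cos(\pi/N)}\right)$. (Here points are written in the $a_2a_1$-plane, first coordinate $a_2$, second coordinate $a_1$.) Consequently $R_N$ is the stable region of the zero solution of the linear fractional coupled map lattice with this $A$.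
   Context: Fractional-order linear coupled map lattice: for $\alpha\in(0,1)$, $X_{t+1}=X_0+\sum_{j=0}^{t}\frac{\Gamma(t-j+\alpha)}{\Gamma(\alpha)\Gamma(t-j+1)}(A-I)X_j$, $X_t\in\mathbb{R}^N$. Connectivity matrix for $N\ge 3$: $A$ is the $N\times N$ circulant matrix with $A_{k,k}=a_1$, $A_{k,k+1}=a_2$, $A_{k,k-1}=a_0$ (indices taken modulo $N$, i.e. periodic boundary conditions: $A_{1,N}=a_0$, $A_{N,1}=a_2$), all other entries $0$; for $N=2$, $A=\begin{pmatrix}a_1&a_0+a_2\\ a_0+a_2&a_1\end{pmatrix}$; for $N=1$, $A=(a_0+a_1+a_2)$. Stability criterion used to define ''stable region'': the zero solution is asymptotically stable exactly when every eigenvalue of $A$ lies in the open region enclosed by the curve $\beta(t)=1+e^{it}(1-e^{-it})^{\alpha}$, $0\le t\le 2\pi$ (principal branch), and a real number lies in this region iff it lies in $(1-2^{\alpha},1)$. *)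

(* Defs.v *)
From HB Require Import structures.
From mathcomp Require Import all_boot all_order all_algebra.
From mathcomp Require Import all_classical all_reals all_analysis.
Set Implicit Arguments. Unset Strict Implicit. Unset Printing Implicit Defensive.
Import Order.TTheory GRing.Theory Num.Theory.
Import numFieldNormedType.Exports.
Local Open Scope ring_scope.
Local Open Scope classical_set_scope.

Definition cml_matrix (R : pzRingType) (N : nat) (a0 a1 a2 : R) : 'M[R]_N :=
  \matrix_(i < N, j < N)
    if (3 <= N)%N then
      (if (j : nat) == i then a1
       else if (j : nat) == (i.+1 %% N)%N then a2
       else if (j : nat) == ((i + N).-1 %% N)%N then a0
       else 0)
    else if N == 2%N then (if (i : nat) == j then a1 else a0 + a2)
    else a0 + a1 + a2.

Definition RN (R : realType) (alpha : R) (N : nat) : set (R * R) :=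
  [set p | forall lambda : R,
      eigenvalue (cml_matrix N p.1 p.2 p.1) lambda ->
      1 - 2 `^ alpha < lambda < 1].

Definition quadrilateral (R : realType) (P1 P2 P3 P4 : R * R) : set (R * R) :=
  [set p | exists t1 t2 t3 t4 : R,
      [/\ [/\ 0 <= t1, 0 <= t2, 0 <= t3 & 0 <= t4],
          t1 + t2 + t3 + t4 = 1,
          p.1 = t1 * P1.1 + t2 * P2.1 + t3 * P3.1 + t4 * P4.1 &
          p.2 = t1 * P1.2 + t2 * P2.2 + t3 * P3.2 + t4 * P4.2]].

(* Main.v *)
Require Import Defs.
From HB Require Import structures.
From mathcomp Require Import all_boot all_order all_algebra.
From mathcomp Require Import all_classical all_reals all_analysis.
From mathcomp Require Import ring lra zify.
Import Order.TTheory GRing.Theory Num.Theory.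
Import numFieldNormedType.Exports.
Local Open Scope ring_scope.
Local Open Scope classical_set_scope.

Lemma succ_mod (N i : nat) : (i < N)%N -> (i.+1 %% N = if (i.+1 < N)%N then i.+1 else 0)%N.
Proof.
move=> hi; case: ltnP => h; first by rewrite modn_small.
have -> : i.+1 = N by lia.
by rewrite modnn.
Qed.

Lemma pred_mod (N i : nat) : (i < N)%N -> ((i + N).-1 %% N = if (0 < i)%N then i.-1 else N.-1)%N.
Proof.
move=> hi; case: ltnP => h.
  have -> : (i + N).-1 = (i.-1 + N)%N by lia.
  by rewrite modnDr modn_small //; lia.
have -> : i = 0%N by lia.
by rewrite add0n modn_small //; lia.
Qed.

Section S.
Variable R : realType.

Lemma cmlE N (hN : (2 <= N)%N) (a1 a2 : R) (i j : 'I_N) :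
  cml_matrix N a2 a1 a2 i j =
  a1 * ((j:nat) == i)%:R + a2 * ((j:nat) == (i.+1 %% N)%N)%:R
  + a2 * ((j:nat) == ((i + N).-1 %% N)%N)%:R.
Proof.
rewrite mxE; case: ifP => h3.
  have hi := ltn_ord i; have hj := ltn_ord j.
  rewrite succ_mod // pred_mod //.
  case: (eqVneq (j:nat) i) => e1;
  case: (eqVneq (j:nat) (if (i.+1 < N)%N then i.+1 else 0%N)) => e2;
  case: (eqVneq (j:nat) (if (0 < i)%N then i.-1 else N.-1)) => e3;
  rewrite ?mulr1 ?mulr0 ?addr0 ?add0r //; exfalso;
  move: e1 e2 e3; case: ifP; case: ifP; move=> *; lia.
have eN : N = 2%N by lia.
subst N.
case: i => [[|[|i]] hi] //=; case: j => [[|[|j]] hj] //=; ring.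
Qed.

Lemma cml_sym N (hN : (2 <= N)%N) (a1 a2 : R) (i j : 'I_N) :
  cml_matrix N a2 a1 a2 i j = cml_matrix N a2 a1 a2 j i.
Proof.
rewrite !cmlE // eq_sym.
have hi := ltn_ord i; have hj := ltn_ord j.
have -> : ((j:nat) == (i.+1 %% N)%N) = ((i:nat) == ((j + N).-1 %% N)%N).
  rewrite succ_mod // pred_mod //; case: ifP; case: ifP => *; apply/eqP/eqP; lia.
have -> : ((j:nat) == ((i + N).-1 %% N)%N) = ((i:nat) == (j.+1 %% N)%N).
  rewrite succ_mod // pred_mod //; case: ifP; case: ifP => *; apply/eqP/eqP; lia.
ring.
Qed.

Lemma sum_delta N (k : nat) (hk : (k < N)%N) (a : R) (f : nat -> R) :
  \sum_(j < N) a * ((j:nat) == k)%:R * f j = a * f k.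
Proof.
rewrite (bigD1 (Ordinal hk)) //= eqxx big1 ?addr0 ?mulr1 // => j hj.
have -> : ((j:nat) == k) = false.
  apply/negbTE; apply: contra hj => /eqP e; apply/eqP/val_inj => /=; exact e.
by rewrite mulr0 mul0r.
Qed.

Lemma cml_rowsum N (hN : (2 <= N)%N) (a1 a2 : R) (f : nat -> R) (i : 'I_N) :
  \sum_(j < N) cml_matrix N a2 a1 a2 i j * f j =
  a1 * f i + a2 * f (i.+1 %% N)%N + a2 * f ((i + N).-1 %% N)%N.
Proof.
have hN0 : (0 < N)%N by lia.
under eq_bigr => j _ do rewrite cmlE // !mulrDl.
rewrite !big_split /= !sum_delta //; [exact: ltn_pmod | exact: ltn_pmod].
Qed.
End S.

Section S2.
Variable R : realType.

Lemma cos_per (T x : R) (m : nat) : cos T = 1 -> sin T = 0 ->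
  cos (x + m%:R * T) = cos x /\ sin (x + m%:R * T) = sin x.
Proof.
move=> hc hs; elim: m x => [|m IH] x; first by rewrite mul0r addr0.
have -> : x + m.+1%:R * T = (x + m%:R * T) + T by rewrite -natr1 mulrDl mul1r addrA.
by rewrite sinD cosD hc hs; have [-> ->] := IH x; split; ring.
Qed.

Lemma cos2piZ (m : nat) : cos (m%:R * pi *+ 2) = 1 :> R /\ sin (m%:R * pi *+ 2) = 0 :> R.
Proof.
have := @cos_per (pi *+ 2) 0 m (cos2pi R) (sin2pi R).
by rewrite add0r cos0 sin0 mulrnAr.
Qed.

Lemma cos_modN (N : nat) (phi : R) (n : nat) : (0 < N)%N ->
  cos (N%:R * phi) = 1 -> sin (N%:R * phi) = 0 ->
  cos ((n %% N)%N%:R * phi) = cos (n%:R * phi) /\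
  sin ((n %% N)%N%:R * phi) = sin (n%:R * phi).
Proof.
move=> hN hc hs.
have -> : n%:R * phi = (n %% N)%N%:R * phi + (n %/ N)%N%:R * (N%:R * phi).
  by rewrite {1}(divn_eq n N) natrD natrM; ring.
by have [-> ->] := cos_per (N%:R * phi) ((n %% N)%N%:R * phi) (n %/ N)%N hc hs.
Qed.

Lemma cos_eig N (hN : (2 <= N)%N) (a1 a2 phi : R) (i : 'I_N) :
  cos (N%:R * phi) = 1 -> sin (N%:R * phi) = 0 ->
  \sum_(j < N) cml_matrix N a2 a1 a2 i j * cos (j%:R * phi) =
    (a1 + 2 * a2 * cos phi) * cos (i%:R * phi) /\
  \sum_(j < N) cml_matrix N a2 a1 a2 i j * sin (j%:R * phi) =
    (a1 + 2 * a2 * cos phi) * sin (i%:R * phi).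
Proof.
move=> hc hs.
have hN0 : (0 < N)%N by lia.
rewrite (@cml_rowsum R N hN a1 a2 (fun n => cos (n%:R * phi))) //.
rewrite (@cml_rowsum R N hN a1 a2 (fun n => sin (n%:R * phi))) //.
have [c1 s1] := cos_modN N phi (i.+1) hN0 hc hs.
have [c2 s2] := cos_modN N phi ((i + N).-1) hN0 hc hs.
rewrite c1 s1 c2 s2.
have e1 : i.+1%:R * phi = i%:R * phi + phi by rewrite -natr1 mulrDl mul1r.
have e2 : ((i + N).-1)%:R * phi = (i%:R * phi - phi) + 1%:R * (N%:R * phi).
  have -> : ((i + N).-1 = i + N.-1)%N by lia.
  have hp : N.-1%:R = N%:R - 1 :> R by rewrite -{2}(prednK hN0) -natr1 addrK.
  rewrite natrD hp; ring.
have [c3 s3] := cos_per (N%:R * phi) (i%:R * phi - phi) 1 hc hs.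
rewrite e1 e2 c3 s3 cosD sinD cosB sinB; split; ring.
Qed.
End S2.

Section S3.
Variable R : realType.

Lemma eig_of_vec N (hN : (2 <= N)%N) (a1 a2 mu : R) (f : nat -> R) :
  (forall i : 'I_N, \sum_(j < N) cml_matrix N a2 a1 a2 i j * f j = mu * f i) ->
  f 0%N != 0 -> eigenvalue (cml_matrix N a2 a1 a2) mu.
Proof.
move=> hf hf0; have h0 : (0 < N)%N by lia.
apply/eigenvalueP; exists (\row_(i < N) f i).
  apply/rowP => j; rewrite !mxE -hf; apply: eq_bigr => i _.
  by rewrite mxE cml_sym // mulrC.
apply/eqP => /rowP /(_ (Ordinal h0)); rewrite !mxE /= => e.
by rewrite e eqxx in hf0.
Qed.

Lemma dot_eig N (a1 a2 lam mu : R) (f : nat -> R) (v : 'rV[R]_N) :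
  v *m cml_matrix N a2 a1 a2 = lam *: v ->
  (forall i : 'I_N, \sum_(j < N) cml_matrix N a2 a1 a2 i j * f j = mu * f i) ->
  lam * (\sum_(i < N) v 0 i * f i) = mu * (\sum_(i < N) v 0 i * f i).
Proof.
move=> hv hf.
transitivity (\sum_(j < N) (v *m cml_matrix N a2 a1 a2) 0 j * f j).
  by rewrite hv mulr_sumr; apply: eq_bigr => j _; rewrite !mxE mulrA.
under eq_bigr => j _ do rewrite mxE mulr_suml.
rewrite exchange_big /= mulr_sumr; apply: eq_bigr => i _.
rewrite mulrCA -hf mulr_sumr; apply: eq_bigr => j _; by rewrite mulrA.
Qed.

Definition ang (N k : nat) : R := pi *+ 2 * k%:R / N%:R.

Lemma ang_per N k : (0 < N)%N ->
  cos (N%:R * ang N k) = 1 /\ sin (N%:R * ang N k) = 0.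
Proof.
move=> hN; have hN' : N%:R != 0 :> R by rewrite pnatr_eq0 -lt0n.
have -> : N%:R * ang N k = k%:R * pi *+ 2.
  by rewrite /ang; field.
exact: cos2piZ.
Qed.

Lemma orth N m : (0 < m)%N -> (m < N)%N ->
  \sum_(k < N) cos (k%:R * ang N m) = 0.
Proof.
move=> hm hmN; have hN : (0 < N)%N by lia.
have hN' : N%:R != 0 :> R by rewrite pnatr_eq0 -lt0n.
pose h : R := pi * m%:R / N%:R.
have eth : ang N m = h *+ 2 by rewrite /ang /h; ring.
rewrite eth.
have key : forall n, 2 * sin h * \sum_(k < n) cos (k%:R * (h *+ 2)) =
   sin (n%:R * (h *+ 2) - h) + sin h.
  elim => [|n IH]; first by rewrite big_ord0 mulr0 mul0r sub0r sinN addNr.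
  rewrite big_ord_recr /= mulrDr IH.
  have -> : n.+1%:R * (h *+ 2) - h = n%:R * (h *+ 2) + h by rewrite -natr1; ring.
  rewrite !sinD cosN sinN; ring.
have hsin : 0 < sin h.
  apply: sin_gt0_pi; apply/andP; split.
    by rewrite /h divr_gt0 // ?mulr_gt0 ?pi_gt0 // ltr0n.
  rewrite /h ltr_pdivrMr ?ltr0n // ltr_pM2l ?pi_gt0 // ltr_nat //.
have := key N.
have -> : N%:R * (h *+ 2) = m%:R * pi *+ 2.
  by rewrite /h; field.
have [c2 s2] := cos2piZ R m.
rewrite sinB c2 s2 mul0r mul1r sub0r addNr => e.
have hne : 2 * sin h != 0 by rewrite mulf_neq0 // gt_eqF.
by apply: (mulfI hne); rewrite mulr0.
Qed.

Lemma orth2 N (j l : nat) : (j < N)%N -> (l < N)%N ->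
  \sum_(k < N) cos (l%:R * ang N k - j%:R * ang N k) =
  if j == l then N%:R else 0.
Proof.
move=> hj hl.
case: (ltngtP j l) => hjl.
- transitivity (\sum_(k < N) cos (k%:R * ang N (l - j))); last by apply: orth; lia.
  apply: eq_bigr => k _; congr cos; rewrite /ang natrB; last by lia.
  ring.
- transitivity (\sum_(k < N) cos (k%:R * ang N (j - l))); last by apply: orth; lia.
  apply: eq_bigr => k _; rewrite -cosN; congr cos; rewrite /ang natrB; last by lia.
  ring.
- rewrite hjl; under eq_bigr => k _ do rewrite subrr cos0.
  by rewrite sumr_const card_ord.
Qed.

End S3.

Section S4.
Variable R : realType.

Lemma eig_char N (hN : (2 <= N)%N) (a1 a2 lam : R) :
  eigenvalue (cml_matrix N a2 a1 a2) lam ->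
  exists k, (k < N)%N /\ lam = a1 + 2 * a2 * cos (ang R N k).
Proof.
case/eigenvalueP => v hv hv0.
have [//|Hno] := pselect (exists k, (k < N)%N /\ lam = a1 + 2 * a2 * cos (ang R N k)).
exfalso; move/eqP: hv0; apply.
have hN0 : (0 < N)%N by lia.
have hN' : N%:R != 0 :> R by rewrite pnatr_eq0 -lt0n.
have hz : forall k, (k < N)%N ->
   \sum_(i < N) v 0 i * cos (i%:R * ang R N k) = 0 /\
   \sum_(i < N) v 0 i * sin (i%:R * ang R N k) = 0.
  move=> k hk.
  have hne : lam - (a1 + 2 * a2 * cos (ang R N k)) != 0.
    by rewrite subr_eq0; apply/eqP => e; apply: Hno; exists k.
  have [c s] := ang_per R N k hN0.
  have hc : forall i : 'I_N, \sum_(j < N) cml_matrix N a2 a1 a2 i j * cos (j%:R * ang R N k) = (a1 + 2 * a2 * cos (ang R N k)) * cos (i%:R * ang R N k).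
    by move=> i; have [-> _] := @cos_eig R N hN a1 a2 _ i c s.
  have hs : forall i : 'I_N, \sum_(j < N) cml_matrix N a2 a1 a2 i j * sin (j%:R * ang R N k) = (a1 + 2 * a2 * cos (ang R N k)) * sin (i%:R * ang R N k).
    by move=> i; have [_ ->] := @cos_eig R N hN a1 a2 _ i c s.
  have d1 := @dot_eig R N a1 a2 lam _ (fun n => cos (n%:R * ang R N k)) v hv hc; have d2 := @dot_eig R N a1 a2 lam _ (fun n => sin (n%:R * ang R N k)) v hv hs.
  split; apply: (mulfI hne); rewrite mulr0 mulrBl; apply/eqP; rewrite subr_eq0; apply/eqP.
    exact: d1.
  exact: d2.
apply/rowP => l; rewrite mxE.
apply: (mulfI hN'); rewrite mulr0.
have e : \sum_(k < N) (cos (l%:R * ang R N k) * (\sum_(i < N) v 0 i * cos (i%:R * ang R N k))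
     + sin (l%:R * ang R N k) * (\sum_(i < N) v 0 i * sin (i%:R * ang R N k))) = 0.
  apply: big1 => k _; have [-> ->] := hz k (ltn_ord k); ring.
rewrite -e.
under eq_bigr => k _ do rewrite !mulr_sumr -big_split /=.
rewrite exchange_big /=.
rewrite (bigD1 l) //= [X in _ = _ + X]big1 ?addr0.
  have o := @orth2 R N l l (ltn_ord l) (ltn_ord l); rewrite eqxx in o.
  rewrite -o mulrC mulr_sumr.
  apply: eq_bigr => k _; rewrite cosB; ring.
move=> i hi.
have := @orth2 R N i l (ltn_ord i) (ltn_ord l).
have -> : ((i : nat) == l) = false.
  by apply/negbTE; apply: contra hi => /eqP ?; apply/eqP/val_inj.
move=> o.
transitivity (v 0 i * \sum_(k < N) cos (l%:R * ang R N k - i%:R * ang R N k)).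
  rewrite mulr_sumr; apply: eq_bigr => k _; rewrite cosB; ring.
by rewrite o mulr0.
Qed.
End S4.

Section S5.
Variable R : realType.

Lemma lin_lt (a b t cm X : R) : -cm <= t -> t <= 1 -> 0 < 1 + cm ->
  a + b < X -> a - b * cm < X -> a + b * t < X.
Proof.
move=> h1 h2 hc hu hw.
have e : (1 + cm) * (a + b * t - X) = (t + cm) * (a + b - X) + (1 - t) * (a - b * cm - X) by ring.
rewrite -subr_lt0 -(pmulr_rlt0 _ hc) e.
have hu' : a + b - X < 0 by rewrite subr_lt0.
have hw' : a - b * cm - X < 0 by rewrite subr_lt0.
have : 0 <= t + cm by lra.
rewrite le_eqVlt => /orP [/eqP h | h].
  rewrite -h mul0r add0r pmulr_rlt0 //; lra.
rewrite -[0]addr0; apply: ltr_leD; first by rewrite pmulr_rlt0.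
apply: mulr_ge0_le0; lra.
Qed.

Lemma RN_char (alpha : R) N (hN : (2 <= N)%N) (cm phi : R) :
  0 < 1 + cm -> cos (N%:R * phi) = 1 -> sin (N%:R * phi) = 0 -> cos phi = - cm ->
  (forall k, (k < N)%N -> - cm <= cos (ang R N k)) ->
  RN alpha N = [set p : R * R | (1 - 2 `^ alpha < p.2 + 2 * p.1 < 1) &&
                        (1 - 2 `^ alpha < p.2 - 2 * p.1 * cm < 1)].
Proof.
move=> hcm hc hs hcp hb.
apply/seteqP; split => p /=.
  move=> H; apply/andP; split; apply: H.
    apply: (@eig_of_vec R N hN p.2 p.1 _ (fun _ => 1)); last exact: oner_neq0.
    by move=> i; rewrite (@cml_rowsum R N hN p.2 p.1 (fun _ => 1)); ring.
  apply: (@eig_of_vec R N hN p.2 p.1 _ (fun n => cos (n%:R * phi))); last first.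
    by rewrite mul0r cos0 oner_neq0.
  move=> i; have [-> _] := @cos_eig R N hN p.2 p.1 phi i hc hs.
  rewrite hcp; ring.
move=> /andP [/andP [u1 u2] /andP [w1 w2]] lam /(@eig_char R N hN _ _ _) [k [hk ->]].
have hb' := hb k hk; have hle := cos_le1 (ang R N k).
apply/andP; split.
  rewrite -ltrN2 opprD -mulNr.
  apply: lin_lt; [exact: hb'|exact: hle|exact: hcm|lra|lra].
apply: lin_lt; [exact: hb'|exact: hle|exact: hcm|lra|lra].
Qed.

Lemma cos_bound_half N m : (0 < N)%N -> (m.*2 < N)%N ->
  - cos (pi / N%:R) <= cos (ang R N m) :> R.
Proof.
move=> hN hm.
have hN' : (0 : R) < N%:R by rewrite ltr0n.
have hpi := pi_gt0 R.
have -> : - cos (pi / N%:R) = cos (pi - pi / N%:R) :> R by rewrite cosB cospi sinpi; ring.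
have h0 : 0 <= ang R N m by rewrite /ang divr_ge0 // mulr_ge0 // mulrn_wge0 // ltW.
have h1 : ang R N m <= pi - pi / N%:R.
  rewrite /ang ler_pdivrMr // mulrBl divfK ?gt_eqF //.
  have : (m.*2.+1%:R <= N%:R :> R) by rewrite ler_nat.
  rewrite -natr1 -muln2 natrM => hh; nra.
have h2 : 0 <= pi / N%:R :> R by rewrite divr_ge0 // ltW.
rewrite leNgt ltr_cos ?in_itv /= -?leNgt //; apply/andP; split; lra.
Qed.

Lemma cos_bound_odd N k : odd N -> (k < N)%N ->
  - cos (pi / N%:R) <= cos (ang R N k) :> R.
Proof.
move=> ho hk.
have hN : (0 < N)%N by lia.
have := odd_double_half N; rewrite ho /= => e.
case: (ltnP (k.*2) N) => h.
  exact: cos_bound_half.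
have -> : cos (ang R N k) = cos (ang R N (N - k)).
  have -> : ang R N k = pi *+ 2 - ang R N (N - k).
    have hN' : N%:R != 0 :> R by rewrite pnatr_eq0 -lt0n.
    rewrite /ang natrB; last by lia.
    by field.
  by rewrite cosB cos2pi sin2pi; ring.
apply: cos_bound_half => //.
have : (k.*2 != N)%N.
  apply/negP => /eqP e2; move: ho; by rewrite -e2 odd_double.
lia.
Qed.
End S5.

Section S6.
Variable R : realType.

Lemma nbhs2P (p : R * R) (A : set (R * R)) :
  nbhs p A <-> exists2 e : R, 0 < e & forall q : R * R,
     `|p.1 - q.1| < e -> `|p.2 - q.2| < e -> A q.
Proof.
rewrite nbhs_ballP; split=> -[e e0 H]; exists e => //.
  move=> q h1 h2; apply: H. split; rewrite /= -?ball_normE /=. exact h1. exact h2.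
move=> q [h1 h2]; apply: H; rewrite -?ball_normE in h1 h2; [exact h1|exact h2].
Qed.

Lemma quad_eq (s cm : R) : 0 < s -> 0 < 1 + cm ->
  quadrilateral (0, 1) (- (s / 2 / (1 + cm)), s / (1 + cm) + 1 - s) (0, 1 - s)
     (s / 2 / (1 + cm), 1 - s / (1 + cm)) =
  [set p | (1 - s <= p.2 + 2 * p.1 <= 1) && (1 - s <= p.2 - 2 * p.1 * cm <= 1)].
Proof.
move=> hs hK; have hK0 : 1 + cm != 0 by rewrite gt_eqF.
have hs0 : s != 0 by rewrite gt_eqF.
apply/seteqP; split => p /=.
  case=> t1 [t2 [t3 [t4 [[h1 h2 h3 h4] hsum e1 e2]]]].
  have et1 : t1 = 1 - t2 - t3 - t4 by lra.
  have eu : p.2 + 2 * p.1 = 1 - s * (t2 + t3).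
    by rewrite e1 e2 /= et1; field.
  have ew : p.2 - 2 * p.1 * cm = 1 - s * (t3 + t4).
    by rewrite e1 e2 /= et1; field.
  have g1 : 0 <= s * (t2 + t3) by apply: mulr_ge0; lra.
  have g2 : s * (t2 + t3) <= s by apply: ler_piMr; lra.
  have g3 : 0 <= s * (t3 + t4) by apply: mulr_ge0; lra.
  have g4 : s * (t3 + t4) <= s by apply: ler_piMr; lra.
  rewrite eu ew; apply/andP; split; apply/andP; split; lra.
move=> /andP [/andP [u1 u2] /andP [w1 w2]].
pose x := (p.2 + 2 * p.1 - (1 - s)) / s.
pose y := (p.2 - 2 * p.1 * cm - (1 - s)) / s.
have x0 : 0 <= x by apply: divr_ge0; lra.
have x1 : x <= 1 by rewrite /x ler_pdivrMr // mul1r; lra.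
have y0 : 0 <= y by apply: divr_ge0; lra.
have y1 : y <= 1 by rewrite /y ler_pdivrMr // mul1r; lra.
exists (x * y), ((1 - x) * y), ((1 - x) * (1 - y)), (x * (1 - y)).
split.
- split; apply: mulr_ge0 => //; lra.
- ring.
- by rewrite /= /x /y; field; rewrite hK0 hs0.
- by rewrite /= /x /y; field; rewrite hK0 hs0.
Qed.

Lemma interior_eq (s cm : R) : 0 < s -> -1 <= cm -> cm <= 1 ->
  interior [set p : R * R | (1 - s <= p.2 + 2 * p.1 <= 1) && (1 - s <= p.2 - 2 * p.1 * cm <= 1)] =
  [set p | (1 - s < p.2 + 2 * p.1 < 1) && (1 - s < p.2 - 2 * p.1 * cm < 1)].
Proof.
move=> hs hc1 hc2.
apply/seteqP; split => p.
  rewrite /interior => /nbhs2P [e e0 H] /=.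
  have ha : forall z : R, `|z - (z + e / 2)| < e /\ `|z - (z - e / 2)| < e.
    move=> z; rewrite !opprD !addrA !subrr !sub0r opprK normrN !gtr0_norm ?divr_gt0 //; lra.
  have hz : forall z : R, `|z - z| < e by move=> z; rewrite subrr normr0.
  have /= /andP [/andP [a1 a2] _] := H (p.1 + e / 2, p.2) (proj1 (ha p.1)) (hz p.2).
  have /= /andP [/andP [b1 b2] _] := H (p.1 - e / 2, p.2) (proj2 (ha p.1)) (hz p.2).
  have /= /andP [_ /andP [c1 c2]] := H (p.1, p.2 + e / 2) (hz p.1) (proj1 (ha p.2)).
  have /= /andP [_ /andP [d1 d2]] := H (p.1, p.2 - e / 2) (hz p.1) (proj2 (ha p.2)).
  apply/andP; split; apply/andP; split; nra.
move=> /= /andP [/andP [u1 u2] /andP [w1 w2]].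
apply/nbhs2P.
pose d1 := p.2 + 2 * p.1 - (1 - s).
pose d2 := 1 - (p.2 + 2 * p.1).
pose d3 := p.2 - 2 * p.1 * cm - (1 - s).
pose d4 := 1 - (p.2 - 2 * p.1 * cm).
pose m := Num.min (Num.min d1 d2) (Num.min d3 d4).
have hm1 : m <= d1 by rewrite /m !ge_min lexx.
have hm2 : m <= d2 by rewrite /m !ge_min lexx !orbT.
have hm3 : m <= d3 by rewrite /m !ge_min lexx !orbT.
have hm4 : m <= d4 by rewrite /m !ge_min lexx !orbT.
have hm0 : 0 < m by rewrite /m !lt_min; apply/andP; split; apply/andP; split; rewrite /d1 /d2 /d3 /d4; lra.
exists (m / 3); first by rewrite divr_gt0.
move=> q hq1 hq2.
have hcd : `|cm * (p.1 - q.1)| < m / 3.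
  rewrite normrM; apply: (le_lt_trans _ hq1); apply: ler_piMl => //.
  by rewrite ler_norml; apply/andP; split.
move: hq1 hq2 hcd; rewrite !ltr_norml => /andP [e1 e2] /andP [e3 e4] /andP [e5 e6] /=.
rewrite /d1 /d2 /d3 /d4 in hm1 hm2 hm3 hm4.
apply/andP; split; apply/andP; split; nra.
Qed.
End S6.

Theorem theorem3 (R : realType) (alpha : R) (halpha0 : 0 < alpha) (halpha1 : alpha < 1) :
  (forall N : nat, (2 <= N)%N -> ~~ odd N ->
     RN alpha N =
     interior (quadrilateral
       (0, 1)
       (- (2 `^ (alpha - 2)), 2 `^ (alpha - 1) + 1 - 2 `^ alpha)
       (0, 1 - 2 `^ alpha)
       (2 `^ (alpha - 2), 1 - 2 `^ (alpha - 1)))) /\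
  (forall N : nat, (3 <= N)%N -> odd N ->
     let c := 1 + cos (pi / N%:R) in
     RN alpha N =
     interior (quadrilateral
       (0, 1)
       (- (2 `^ (alpha - 1) / c), 2 `^ alpha / c + 1 - 2 `^ alpha)
       (0, 1 - 2 `^ alpha)
       (2 `^ (alpha - 1) / c, 1 - 2 `^ alpha / c))).
Proof.
have hs : 0 < 2 `^ alpha :> R by apply: powR_gt0.
have h2 : (2 : R) != 0 by rewrite pnatr_eq0.
have p1 : 2 `^ (alpha - 1) = 2 `^ alpha / 2 :> R.
  rewrite powRB; last by apply/implyP => _.
  by rewrite powRr1.
have p2 : 2 `^ (alpha - 2) = 2 `^ alpha / 2 / (1 + 1) :> R.
  rewrite powRB; last by apply/implyP => _.
  by rewrite (powR_mulrn 2) //; field.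
split.
  move=> N hN he.
  have eN : N = ((N./2) * 2)%N.
    by have := odd_double_half N; rewrite (negbTE he) add0n -muln2.
  have hc : cos (N%:R * pi) = 1 :> R.
    by rewrite {1}eN natrM mulrAC mulr_natr; case: (cos2piZ R (N./2)).
  have hsn : sin (N%:R * pi) = 0 :> R.
    by rewrite {1}eN natrM mulrAC mulr_natr; case: (cos2piZ R (N./2)).
  have h11 : (0 : R) < 1 + 1 by lra.
  rewrite (@RN_char R alpha N hN 1 pi h11 hc hsn (cospi R) (fun k _ => cos_geN1 _)).
  have -> : 2 `^ (alpha - 1) = 2 `^ alpha / (1 + 1) :> R by rewrite p1.
  rewrite p2 (@quad_eq R (2 `^ alpha) 1 hs h11).
  by rewrite (@interior_eq R (2 `^ alpha) 1 hs) //; lra.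
move=> N hN ho c; rewrite /c.
have hN0 : (0 < N)%N by lia.
have hN' : (0 : R) < N%:R by rewrite ltr0n.
have hcpos : 0 < cos (pi / N%:R) :> R.
  apply: cos_gt0_pihalf; apply/andP; split.
    have : 0 < pi / N%:R :> R by rewrite divr_gt0 // pi_gt0.
    have := pi_gt0 R; lra.
  have hx : pi / N%:R * N%:R = pi :> R by rewrite divfK // gt_eqF.
  have h3 : (3 : R) <= N%:R by rewrite ler_nat.
  have hp : 0 < pi / N%:R :> R by rewrite divr_gt0 // pi_gt0.
  nra.
have hc3 := cos_le1 (pi / N%:R : R).
have hK : (0 : R) < 1 + cos (pi / N%:R) by lra.
have ephi : N%:R * (pi - pi / N%:R) = (N./2)%:R * pi *+ 2 :> R.
  have := odd_double_half N; rewrite ho /= => e.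
  have -> : N%:R = 1 + (N./2)%:R * 2 :> R by rewrite -[in LHS]e natrD -muln2 natrM; ring.
  field; rewrite gt_eqF //; lra.
have [hc hsn] := cos2piZ R (N./2).
rewrite -ephi in hc hsn.
have hcp : cos (pi - pi / N%:R) = - cos (pi / N%:R) :> R.
  by rewrite cosB cospi sinpi; ring.
rewrite (@RN_char R alpha N _ (cos (pi / N%:R)) _ hK hc hsn hcp); last first.
- by move=> k hk; apply: cos_bound_odd.
- lia.
rewrite p1 (@quad_eq R (2 `^ alpha) _ hs hK).
by rewrite (@interior_eq R (2 `^ alpha) _ hs) // cos_geN1.
Qed.
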